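(* Let $d>1$, let $I$ be a finite set of hidden neurons, $K$ a finite set of samples with data $\mathbf{x}_k\in\mathbb{R}^d$, $y_k\in\mathbb{R}$, and consider the scalar-output ReLU network $\hat y(\mathbf{P};\mathbf{x})=\sum_{i\in I}h_{j_0i}\max(\mathbf{w}_i\cdot\mathbf{x},0)$ with parameters $\mathbf{P}=(\mathbf{w}_i,h_{j_0i})_{i\in I}\in\mathbb{R}^D$ and loss $\mathcal{L}(\mathbf{P})=\frac12\sum_{k\in K}(\hat y(\mathbf{P};\mathbf{x}_k)-y_k)^2$. Let $\mathbf{P}(t)$, $t\ge0$, satisfy $\frac{d\mathbf{P}}{dt}=-\frac{\partial\mathcal{L}}{\partial\mathbf{P}}$, where in the chain rule the derivative of $\mathrm{ReLU}(x)=\max(x,0)$ is taken to be $\mathbbm{1}_{\{x>0\}}$, with initialization $\mathbf{P}(0)=\sigma\mathbf{A}$ for a fixed arbitrary $\mathbf{A}\in\mathbb{R}^D$ and $\sigma>0$. If $\overline{\mathbf{P}}=(\overline{\mathbf{w}}_i,\overline{h}_{j_0i})_{i\in I}$ is a stationary point of $\mathcal{L}$ that is not a local minimum and $\lim_{\sigma\to0^+}\big(\inf_{t}\|\mathbf{P}(t)-\overline{\mathbf{P}}\|\big)=0$, then there exists $i\in I$ with $\overline{\mathbf{w}}_i=\mathbf{0}$ and $\overline{h}_{j_0i}=0$.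
   Context: A point $\overline{\mathbf{P}}$ is a stationary point of $\mathcal{L}$ if $\lim_{\alpha\to0^+}\frac{\mathcal{L}(\overline{\mathbf{P}}+\alpha\mathbf{d})-\mathcal{L}(\overline{\mathbf{P}})}{\alpha}\ge0$ for all $\mathbf{d}\in\mathbb{R}^D$. The trajectory $\mathbf{P}(t)$ depends on $\sigma$. *)

(* Defs.v *)
From mathcomp Require Import all_boot all_order all_algebra all_classical all_reals all_analysis.
Import numFieldNormedType.Exports.
Set Implicit Arguments. Unset Strict Implicit. Unset Printing Implicit Defensive.
Import Order.TTheory GRing.Theory Num.Theory.
Local Open Scope ring_scope.
Local Open Scope classical_set_scope.

(* Parameters P = (w, h): row i of the n x d matrix P.1 is w_i,
   entry (0, i) of the row vector P.2 is h_{j0 i}.  Hidden neurons: I = 'I_n,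
   samples: K = 'I_N. *)
Definition param (R : realType) (n d : nat) := ('M[R]_(n, d) * 'rV[R]_n)%type.

Definition relu (R : realType) (r : R) : R := Num.max r 0.

Definition wdot (R : realType) (n d : nat) (P : param R n d) (i : 'I_n)
  (x : 'rV[R]_d) : R := \sum_(j < d) P.1 i j * x 0 j.

Definition yhat (R : realType) (n d : nat) (P : param R n d) (x : 'rV[R]_d) : R :=
  \sum_(i < n) P.2 0 i * relu (wdot P i x).

Definition loss (R : realType) (n d N : nat) (x : 'I_N -> 'rV[R]_d)
  (y : 'I_N -> R) (P : param R n d) : R :=
  2^-1 * \sum_(k < N) (yhat P (x k) - y k) ^+ 2.

(* Chain-rule "gradient" of L with ReLU'(u) := 1_{u > 0}. *)
Definition gradL (R : realType) (n d N : nat) (x : 'I_N -> 'rV[R]_d)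
  (y : 'I_N -> R) (P : param R n d) : param R n d :=
  (\matrix_(i < n, j < d)
      \sum_(k < N) (yhat P (x k) - y k) * P.2 0 i
                   * (if 0 < wdot P i (x k) then 1 else 0) * x k 0 j,
   \row_(i < n) \sum_(k < N) (yhat P (x k) - y k) * relu (wdot P i (x k))).

(* p : [0, +oo) -> R^D solves dP/dt = -dL/dP for t >= 0
   (two-sided derivative for t > 0, right derivative at t = 0). *)
Definition gradient_flow (R : realType) (n d N : nat) (x : 'I_N -> 'rV[R]_d)
  (y : 'I_N -> R) (p : R -> param R n d) : Prop :=
  (forall t : R, 0 < t -> is_derive t (1 : R) p (- gradL x y (p t))) /\
  ((fun h : R => h^-1 *: (p h - p 0)) @ 0^'+ --> - gradL x y (p 0)).

Definition stationary (R : realType) (n d : nat) (L : param R n d -> R)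
  (Pb : param R n d) : Prop :=
  forall dir : param R n d, exists l : R,
    ((fun a : R => a^-1 * (L (Pb + a *: dir) - L Pb)) @ 0^'+ --> l) /\ 0 <= l.

Definition local_min (R : realType) (n d : nat) (L : param R n d -> R)
  (Pb : param R n d) : Prop :=
  \forall Q \near Pb, L Pb <= L Q.

(* Main.v *)
Require Import Defs.
From mathcomp Require Import all_boot all_order all_algebra all_classical all_reals all_analysis.
From mathcomp Require Import ring lra.
Import numFieldNormedType.Exports.
Import Order.TTheory GRing.Theory Num.Theory.
Local Open Scope ring_scope.
Local Open Scope classical_set_scope.
Set Implicit Arguments. Unset Strict Implicit. Unset Printing Implicit Defensive.

Definition rho (R : realType) (u v : R) : R :=
  if 0 < u then v else if u == 0 then relu v else 0.

Lemma relu_pos (R : realType) (u : R) : 0 <= u -> relu u = u.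
Proof. by move=> h; rewrite /relu max_l. Qed.
Lemma relu_neg (R : realType) (u : R) : u <= 0 -> relu u = 0.
Proof. by move=> h; rewrite /relu max_r. Qed.

Lemma relu_scale (R : realType) (c u : R) : 0 <= c -> relu (c * u) = c * relu u.
Proof.
move=> c0; case: (leP 0 u) => hu.
- by rewrite !relu_pos ?mulr_ge0.
- have h1 : u <= 0 by exact: ltW.
  rewrite (relu_neg h1) mulr0 relu_neg //; nra.
Qed.

Lemma relu_lin (R : realType) (u v a : R) : (u = 0 \/ `|v| < `|u|) -> 0 <= a <= 1 ->
  relu (u + a * v) = relu u + a * rho u v.
Proof.
move=> huv /andP[a0 a1]; rewrite /rho.
case: (ltgtP 0 u) => hu.
- case: huv => [u0|]; first by move: hu; rewrite u0 ltxx.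
  rewrite (gtr0_norm hu) => /ltr_normlP [h1 h2].
  rewrite !relu_pos //; [exact: ltW| nra].
- case: huv => [u0|]; first by move: hu; rewrite u0 ltxx.
  rewrite (ltr0_norm hu) => /ltr_normlP [h1 h2].
  rewrite !relu_neg ?mulr0 ?addr0 //; [exact: ltW| nra].
- subst u. rewrite GRing.add0r (relu_neg (lexx 0)) GRing.add0r relu_scale //.
Qed.

Definition vd (R : realType) (n d : nat) (V : 'M[R]_(n, d)) (i : 'I_n)
  (z : 'rV[R]_d) : R := \sum_(j < d) V i j * z 0 j.

Definition cc (R : realType) (n d : nat) (Pb : param R n d) (V : 'M[R]_(n, d))
  (z : 'rV[R]_d) : R := \sum_(i < n) Pb.2 0 i * rho (wdot Pb i z) (vd V i z).

Definition good (R : realType) (n d N : nat) (x : 'I_N -> 'rV[R]_d)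
  (Pb : param R n d) (V : 'M[R]_(n, d)) : Prop :=
  forall i k, wdot Pb i (x k) = 0 \/ `|vd V i (x k)| < `|wdot Pb i (x k)|.

Lemma wdot_dir (R : realType) (n d : nat) (Pb : param R n d) V (a : R) i z :
  wdot (Pb + a *: (V, 0)) i z = wdot Pb i z + a * vd V i z.
Proof.
rewrite /wdot /vd mulr_sumr -big_split; apply: eq_bigr => j _ /=.
rewrite !mxE; ring.
Qed.

Lemma yhat_dir (R : realType) (n d N : nat) (x : 'I_N -> 'rV[R]_d)
  (Pb : param R n d) V (a : R) k : good x Pb V -> 0 <= a <= 1 ->
  yhat (Pb + a *: (V, 0)) (x k) = yhat Pb (x k) + a * cc Pb V (x k).
Proof.
move=> gV ha; rewrite /yhat /cc mulr_sumr -big_split; apply: eq_bigr => i _ /=.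
rewrite wdot_dir (relu_lin (gV i k) ha).
rewrite !mxE; ring.
Qed.

Lemma loss_dir (R : realType) (n d N : nat) (x : 'I_N -> 'rV[R]_d) (y : 'I_N -> R)
  (Pb : param R n d) V (a : R) : good x Pb V -> 0 <= a <= 1 ->
  loss x y (Pb + a *: (V, 0)) = loss x y Pb
    + a * (\sum_(k < N) (yhat Pb (x k) - y k) * cc Pb V (x k))
    + a ^+ 2 * (2^-1 * \sum_(k < N) cc Pb V (x k) ^+ 2).
Proof.
move=> gV ha; rewrite /loss.
under eq_bigr do rewrite yhat_dir //.
have E : forall k, (yhat Pb (x k) + a * cc Pb V (x k) - y k) ^+ 2 =
   (yhat Pb (x k) - y k) ^+ 2 + (2 * a) * ((yhat Pb (x k) - y k) * cc Pb V (x k))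
   + a ^+ 2 * cc Pb V (x k) ^+ 2 by move=> k; ring.
under eq_bigr do rewrite E.
rewrite !big_split /= -!mulr_sumr. by field.
Qed.

Lemma stat_S (R : realType) (n d N : nat) (x : 'I_N -> 'rV[R]_d) (y : 'I_N -> R)
  (Pb : param R n d) V : stationary (loss x y) Pb -> good x Pb V ->
  0 <= \sum_(k < N) (yhat Pb (x k) - y k) * cc Pb V (x k).
Proof.
move=> st gV; have [l [hl l0]] := st (V, 0).
set S := \sum_(k < N) _.
pose C := 2^-1 * \sum_(k < N) cc Pb V (x k) ^+ 2.
have E : \forall a \near 0^'+, S + a * C =
    a^-1 * (loss x y (Pb + a *: (V, 0)) - loss x y Pb).
  near=> a.
  have a0 : 0 < a by near: a; exact: nbhs_right_gt.
  have a1 : a < 1 by near: a; exact: nbhs_right_lt.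
  rewrite loss_dir //; last by rewrite (ltW a0) (ltW a1).
  by rewrite /S /C; field; rewrite gt_eqF.
have hS : (fun a => S + a * C) @ 0^'+ --> S.
  rewrite [X in _ --> X](_ : S = S + 0 * C); last by rewrite mul0r addr0.
  apply: cvgD; first exact: cvg_cst.
  apply: cvgMr_tmp. apply: cvg_at_right_filter; exact: cvg_id.
have hf : (fun a => a^-1 * (loss x y (Pb + a *: (V, 0)) - loss x y Pb)) @ 0^'+ --> S.
  by apply: cvg_trans hS; apply: near_eq_cvg.
by rewrite -(cvg_unique _ hl hf).
Unshelve. all: by end_near.
Qed.
Lemma entry_le (R : realType) (m p : nat) (M : 'M[R]_(m, p)) i j : `|M i j| <= `|M|.
Proof.
rewrite [leRHS]/Num.Def.normr /= mx_normrE.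
exact: (le_bigmax _ _ (i, j)).
Qed.

Lemma lip_cont (R : realType) (T : normedModType R) (g : T -> R) :
  (forall u v, `|g u - g v| <= `|u - v|) -> continuous g.
Proof.
move=> hg u; apply/cvgrPdist_lt => e e0.
near=> t; apply: le_lt_trans (hg u t) _.
have : ball u e t by near: t; exact: near_ball.
by rewrite -ball_normE.
Unshelve. all: by end_near.
Qed.

Lemma coord1_cont (R : realType) (n d : nat) (i : 'I_n) (j : 'I_d) :
  continuous (fun Q : param R n d => Q.1 i j).
Proof.
apply: lip_cont => u v; rewrite prod_normE /=.
rewrite le_max; apply/orP; left.
by have := entry_le (u.1 - v.1) i j; rewrite !mxE.
Qed.

Lemma coord2_cont (R : realType) (n d : nat) (i : 'I_n) :
  continuous (fun Q : param R n d => Q.2 0 i).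
Proof.
apply: lip_cont => u v; rewrite prod_normE /=.
rewrite le_max; apply/orP; right.
by have := entry_le (u.2 - v.2) 0 i; rewrite !mxE.
Qed.

Lemma cvg_sumR (R : realType) (T : Type) (F : set_system T) (FF : Filter F) (m : nat)
  (f : 'I_m -> T -> R) (a : 'I_m -> R) :
  (forall j, f j @ F --> a j) -> (fun t => \sum_(j < m) f j t) @ F --> \sum_(j < m) a j.
Proof.
elim: m f a => [|m IH] f a hf.
  rewrite big_ord0; under eq_fun do rewrite big_ord0; exact: cvg_cst.
rewrite big_ord_recr; under eq_fun do rewrite big_ord_recr.
apply: cvgD; last exact: hf.
exact: (IH (fun j => f (widen_ord (leqnSn m) j))).
Qed.

Lemma near_forall (T : Type) (I : finType) (F : set_system T) {FF : Filter F}
  (P : I -> T -> Prop) :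
  (forall i, \forall x \near F, P i x) -> \forall x \near F, forall i, P i x.
Proof. exact: (@filter_forall T I P F FF). Qed.

Lemma nearW' (T : Type) (F : set_system T) {FF : Filter F} (P : T -> Prop) :
  (forall x, P x) -> \forall x \near F, P x.
Proof. exact: nearW. Qed.

Lemma near_mono (T : Type) (F : set_system T) {FF : Filter F} (P Q : T -> Prop) :
  (\forall x \near F, P x) -> (forall x, P x -> Q x) -> \forall x \near F, Q x.
Proof. by move=> h hPQ; apply: filterS h. Qed.

Lemma key (R : realType) (n d N : nat) (x : 'I_N -> 'rV[R]_d) (y : 'I_N -> R)
  (Pb : param R n d) : stationary (loss x y) Pb -> (forall i, Pb.2 0 i != 0) ->
  local_min (loss x y) Pb.
Proof.
move=> st hb.
have FF : Filter (nbhs Pb) by exact: _.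
pose c (Q : param R n d) i := Q.2 0 i / Pb.2 0 i.
pose VQ (Q : param R n d) := \matrix_(i < n, j < d) (Q.1 i j * c Q i - Pb.1 i j).
have eqQ : forall Q, (forall i, 0 < c Q i) ->
    loss x y Q = loss x y (Pb + 1 *: (VQ Q, 0)).
  move=> Q hc.
  have E : forall z, yhat Q z = yhat (Pb + 1 *: (VQ Q, 0)) z.
    move=> z; rewrite /yhat; apply: eq_bigr => i _; rewrite /wdot.
    have -> : \sum_(j < d) (Pb + 1 *: (VQ Q, 0)).1 i j * z 0 j =
        c Q i * \sum_(j < d) Q.1 i j * z 0 j.
      by rewrite mulr_sumr; apply: eq_bigr => j _; rewrite /= !mxE; ring.
    have -> : (Pb + 1 *: (VQ Q, 0)).2 0 i = Pb.2 0 i by rewrite /= !mxE; ring.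
    rewrite relu_scale; last exact: ltW.
    by rewrite /c mulrA mulrCA divff // mulr1.
  by rewrite /loss; congr (_ * _); apply: eq_bigr => k _; rewrite E.
have ccv : forall i, (fun Q => c Q i) @ Pb --> (1 : R).
  move=> i; rewrite [X in _ --> X](_ : 1 = Pb.2 0 i / Pb.2 0 i); last by rewrite divff.
  apply: cvgMr_tmp; exact: coord2_cont.
have H1 : \forall Q \near Pb, forall i, 0 < c Q i.
  apply: (@near_forall _ _ (nbhs Pb) FF) => i.
  have h := (cvgrPdist_lt (FF:=FF) _ _).1 (ccv i) 1 ltr01.
  apply: (@near_mono _ (nbhs Pb) FF _ _ h) => Q' /ltr_normlP [h1 h2]; lra.
have H2 : \forall Q \near Pb, forall i k, wdot Pb i (x k) != 0 ->
    `|vd (VQ Q) i (x k)| < `|wdot Pb i (x k)|.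
  apply: (@near_forall _ _ (nbhs Pb) FF) => i; apply: (@near_forall _ _ (nbhs Pb) FF) => k.
  case: (eqVneq (wdot Pb i (x k)) 0) => hw.
    by apply: (@nearW' _ (nbhs Pb) FF) => Q; rewrite hw; move/eqP.
  have gcv : (fun Q => vd (VQ Q) i (x k)) @ Pb --> 0.
    have -> : (0 : R) = \sum_(j < d) (Pb.1 i j * 1 - Pb.1 i j) * x k 0 j.
      by rewrite big1 // => j _; rewrite mulr1 subrr mul0r.
    rewrite /vd; apply: cvg_sumR => j.
    under eq_fun do rewrite mxE.
    apply: cvgMr_tmp; apply: cvgB; last exact: cvg_cst.
    apply: cvgM; [exact: coord1_cont | exact: ccv].
  have h := (cvgrPdist_lt (FF:=FF) _ _).1 gcv `|wdot Pb i (x k)|.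
  rewrite normr_gt0 in h; have {}h := h hw.
  by apply: (@near_mono _ (nbhs Pb) FF _ _ h) => Q'; rewrite sub0r normrN => h' _.
rewrite /local_min; near=> Q.
have hc : forall i, 0 < c Q i by near: Q; exact: H1.
have hg : forall i k, wdot Pb i (x k) != 0 ->
    `|vd (VQ Q) i (x k)| < `|wdot Pb i (x k)| by near: Q; exact: H2.
have gV : good x Pb (VQ Q).
  move=> i k; case: (eqVneq (wdot Pb i (x k)) 0) => hw; [by left | right; exact: hg].
rewrite (eqQ Q hc).
have h01 : 0 <= (1:R) <= 1 by rewrite ler01 lexx.
rewrite (@loss_dir R n d N x y Pb (VQ Q) 1 gV h01).
have := stat_S st gV.
have : 0 <= 2^-1 * \sum_(k < N) cc Pb (VQ Q) (x k) ^+ 2 :> R.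
  by rewrite mulr_ge0 // ?invr_ge0 ?ler0n // sumr_ge0 // => k _; rewrite sqr_ge0.
lra.
Unshelve. all: by end_near.
Qed.

Lemma derive_coord (R : realType) (V : normedModType R) (g : V -> R) (p : R -> V)
  (t : R) (D : V) :
  (forall u v, g (u - v) = g u - g v) -> (forall (a : R) u, g (a *: u) = a *: g u) ->
  (forall u, `|g u| <= `|u|) ->
  is_derive t 1 p D -> is_derive t 1 (fun s => g (p s)) (g D).
Proof.
move=> gB gZ gN [dp vp].
have gc : continuous g by apply: lip_cont => u v; rewrite -gB; exact: gN.
have hq : (fun h => h^-1 *: ((p \o shift t) (h *: 1) - p t)) @ 0^' --> D.
  by rewrite -vp; exact: dp.
have hq2 : (fun h => h^-1 *: (((fun s => g (p s)) \o shift t) (h *: 1) - g (p t)))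
    @ 0^' --> g D.
  have E : (fun h => h^-1 *: (((fun s => g (p s)) \o shift t) (h *: 1) - g (p t)))
     = g \o (fun h => h^-1 *: ((p \o shift t) (h *: 1) - p t)).
    by apply/funext => h /=; rewrite gZ gB.
  rewrite E; apply: cvg_comp; [exact: hq | exact: gc].
apply: DeriveDef; first by apply/cvg_ex; exists (g D).
exact: cvg_lim.
Qed.

Lemma rcont_coord (R : realType) (V : normedModType R) (g : V -> R) (p : R -> V)
  (D : V) :
  (forall u v, g (u - v) = g u - g v) -> (forall (a : R) u, g (a *: u) = a *: g u) ->
  (forall u, `|g u| <= `|u|) ->
  (fun h => h^-1 *: (p h - p 0)) @ 0^'+ --> D ->
  (fun h => g (p h)) @ 0^'+ --> g (p 0).
Proof.
move=> gB gZ gN hq.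
have gc : continuous g by apply: lip_cont => u v; rewrite -gB; exact: gN.
have hq2 : (fun h => h^-1 *: (g (p h) - g (p 0))) @ 0^'+ --> g D.
  have E : (fun h => h^-1 *: (g (p h) - g (p 0)))
     = g \o (fun h => h^-1 *: (p h - p 0)).
    by apply/funext => h /=; rewrite gZ gB.
  rewrite E; apply: cvg_comp; [exact: hq | exact: gc].
have E : \forall h \near 0^'+, g (p 0) + h *: (h^-1 *: (g (p h) - g (p 0))) = g (p h).
  near=> h.
  have h0 : 0 < h by near: h; exact: nbhs_right_gt.
  by rewrite scalerA divff ?gt_eqF // scale1r addrC subrK.
rewrite [X in _ --> X](_ : g (p 0) = g (p 0) + 0 *: g D); last by rewrite scale0r addr0.
apply: cvg_trans; first exact: (near_eq_cvg E).
apply: cvgD; first exact: cvg_cst.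
apply: cvgZ; last exact: hq2.
apply: cvg_at_right_filter; exact: cvg_id.
Unshelve. all: by end_near.
Qed.

Definition psi (R : realType) (n d : nat) (i : 'I_n) (Q : param R n d) : R :=
  \sum_(j < d) Q.1 i j ^+ 2 - Q.2 0 i ^+ 2.

Section coords.
Context (R : realType) (n d : nat).
Lemma g1B i j (u v : param R n d) : (u - v).1 i j = u.1 i j - v.1 i j.
Proof. by rewrite /= !mxE. Qed.
Lemma g1Z i j (a : R) (u : param R n d) : (a *: u).1 i j = a *: u.1 i j.
Proof. by rewrite /= !mxE. Qed.
Lemma g1N i j (u : param R n d) : `|u.1 i j| <= `|u|.
Proof. rewrite prod_normE le_max; apply/orP; left; exact: entry_le. Qed.
Lemma g2B i (u v : param R n d) : (u - v).2 0 i = u.2 0 i - v.2 0 i.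
Proof. by rewrite /= !mxE. Qed.
Lemma g2Z i (a : R) (u : param R n d) : (a *: u).2 0 i = a *: u.2 0 i.
Proof. by rewrite /= !mxE. Qed.
Lemma g2N i (u : param R n d) : `|u.2 0 i| <= `|u|.
Proof. rewrite prod_normE le_max; apply/orP; right; exact: entry_le. Qed.
End coords.

Lemma relu_ind (R : realType) (w : R) : relu w = (if 0 < w then 1 else 0) * w.
Proof.
case: ifP => hw; first by rewrite mul1r /relu max_l // ltW.
by rewrite mul0r /relu max_r // leNgt hw.
Qed.

Lemma psi_deriv (R : realType) (n d N : nat) (x : 'I_N -> 'rV[R]_d) (y : 'I_N -> R)
  (p : R -> param R n d) (i : 'I_n) (t : R) :
  is_derive t 1 p (- gradL x y (p t)) ->
  is_derive t 1 (fun s => psi i (p s)) 0.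
Proof.
move=> dp.
have da : forall j, is_derive t 1 (fun s => (p s).1 i j) ((- gradL x y (p t)).1 i j).
  move=> j; apply: (derive_coord (g := fun Q : param R n d => Q.1 i j)) => //.
  exact: g1B. exact: g1Z. exact: g1N.
have db : is_derive t 1 (fun s => (p s).2 0 i) ((- gradL x y (p t)).2 0 i).
  apply: (derive_coord (g := fun Q : param R n d => Q.2 0 i)) => //.
  exact: g2B. exact: g2Z. exact: g2N.
have -> : (fun s => psi i (p s)) = \sum_(j < d) ((fun s => (p s).1 i j) * (fun s => (p s).1 i j))
    - (fun s => (p s).2 0 i) * (fun s => (p s).2 0 i).
  apply/funext => s; rewrite /psi /= fct_sumE.
  by under eq_bigr do rewrite expr2.
apply: is_derive_eq.
set Pt := p t.
have key : \sum_(j < d) Pt.1 i j * (\sum_(k < N) (yhat Pt (x k) - y k) * Pt.2 0 i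
     * (if 0 < wdot Pt i (x k) then 1 else 0) * x k 0 j)
   = Pt.2 0 i * \sum_(k < N) (yhat Pt (x k) - y k) * relu (wdot Pt i (x k)).
  under eq_bigr do rewrite mulr_sumr.
  rewrite exchange_big /= mulr_sumr; apply: eq_bigr => k _.
  rewrite relu_ind /wdot !mulr_sumr; apply: eq_bigr => j _.
  move: (if _ then _ else _) => b; rewrite /Pt; ring.
rewrite /gradL /=.
under eq_bigr do rewrite !mxE.
rewrite !mxE.
have E2 : forall u v : R, u *: - v + u *: - v = -2 * (u * v).
  by move=> u v; change (u * - v + u * - v = -2 * (u * v)); ring.
under eq_bigr do rewrite E2.
rewrite E2 -mulr_sumr key; ring.
Qed.

Lemma balance (R : realType) (n d N : nat) (x : 'I_N -> 'rV[R]_d) (y : 'I_N -> R)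
  (p : R -> param R n d) (i : 'I_n) :
  gradient_flow x y p -> forall t, 0 <= t -> psi i (p t) = psi i (p 0).
Proof.
move=> [hd h0].
have cst : forall s t, 0 < s -> s <= t -> psi i (p t) = psi i (p s).
  move=> s t s0 st.
  have H := @MVT_segment R (fun u => psi i (p u)) (fun _ => 0) s t st.
  have H1 : forall z, z \in `]s, t[%R -> is_derive z 1 (fun u => psi i (p u)) 0.
    move=> z; rewrite in_itv /= => /andP[sz _]; apply: psi_deriv; apply: hd.
    exact: lt_trans sz.
  have H2 : {within `[s, t], continuous (fun u => psi i (p u))}.
    apply: derivable_within_continuous => z; rewrite in_itv /= => /andP[sz _].
    have hz : 0 < z by exact: lt_le_trans sz.
    by have [] := psi_deriv i (hd z hz).
  have [c _] := H H1 H2.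
  by rewrite mul0r => /eqP; rewrite subr_eq0 => /eqP.
have lim : (fun h => psi i (p h)) @ 0^'+ --> psi i (p 0).
  rewrite /psi; apply: cvgB.
    apply: cvg_sumR => j; under eq_fun do rewrite expr2; rewrite expr2.
    apply: cvgM; apply: (rcont_coord (g := fun Q : param R n d => Q.1 i j) _ _ _ h0).
    1-6: first [exact: g1B | exact: g1Z | exact: g1N].
  under eq_fun do rewrite expr2; rewrite expr2.
  apply: cvgM; apply: (rcont_coord (g := fun Q : param R n d => Q.2 0 i) _ _ _ h0).
  1-6: first [exact: g2B | exact: g2Z | exact: g2N].
have c1 : forall t, 0 < t -> psi i (p t) = psi i (p 1).
  move=> t t0; case: (leP t 1) => ht.
    by rewrite (cst t 1 t0 ht).
  by rewrite (cst 1 t ltr01 (ltW ht)).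
have E : \forall h \near 0^'+, psi i (p 1) = psi i (p h).
  near=> h; have h0' : 0 < h by near: h; exact: nbhs_right_gt.
  by rewrite c1.
have lim2 : (fun h => psi i (p h)) @ 0^'+ --> psi i (p 1).
  by apply: cvg_trans; first exact: (near_eq_cvg E); exact: cvg_cst.
have e01 : psi i (p 0) = psi i (p 1) by exact: (cvg_unique _ lim lim2).
move=> t; rewrite le_eqVlt => /orP[/eqP <- //|t0].
by rewrite c1 // e01.
Unshelve. all: by end_near.
Qed.

Lemma psi_cont (R : realType) (n d : nat) (i : 'I_n) : continuous (@psi R n d i).
Proof.
move=> Q; rewrite /psi; apply: cvgB.
  apply: cvg_sumR => j; under eq_fun do rewrite expr2; rewrite expr2.
  by apply: cvgM; apply: coord1_cont.
under eq_fun do rewrite expr2; rewrite expr2.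
by apply: cvgM; apply: coord2_cont.
Qed.

Lemma psi_scale (R : realType) (n d : nat) (i : 'I_n) (s : R) (A : param R n d) :
  psi i (s *: A) = s ^+ 2 * psi i A.
Proof.
rewrite /psi /=; under eq_bigr do rewrite mxE exprMn; rewrite mxE exprMn.
by rewrite -mulr_sumr; ring.
Qed.

Theorem corollary2 (R : realType) (d n N : nat) (hd : (1 < d)%N)
  (x : 'I_N -> 'rV[R]_d) (y : 'I_N -> R) (A : param R n d)
  (P : R -> R -> param R n d) (Pbar : param R n d) :
  (forall sigma : R, 0 < sigma ->
     gradient_flow x y (P sigma) /\ P sigma 0 = sigma *: A) ->
  stationary (loss x y) Pbar ->
  ~ local_min (loss x y) Pbar ->
  (fun sigma : R => inf [set `|P sigma t - Pbar| | t in [set t : R | 0 <= t]])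
     @ 0^'+ --> (0 : R) ->
  exists i : 'I_n, row i Pbar.1 = 0 /\ Pbar.2 0 i = 0.
Proof.
move=> Hflow st nlm hlim.
have [i hi] : exists i, Pbar.2 0 i = 0.
  case: (pickP (fun i => Pbar.2 0 i == 0)) => [i /eqP hi | hn]; first by exists i.
  by exfalso; apply: nlm; apply: key => // i; rewrite hn.
have hpsi : psi i Pbar = 0.
  apply/eqP; apply/negPn/negP => hne.
  set Psi := psi i Pbar.
  have e0 : 0 < `|Psi| / 2 by rewrite divr_gt0 // normr_gt0.
  have FF : Filter (nbhs Pbar) by exact: _.
  have H := (cvgrPdist_lt (FF:=FF) _ _).1 (@psi_cont R n d i Pbar) _ e0.
  have [del del0 Hdel] := (nbhs_ballP _ _).1 H.
  pose cA := `|psi i A|.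
  have Hc : \forall s \near (0:R)^'+, s * cA < `|Psi| / 2.
    have hc : (fun s => s * cA) @ 0^'+ --> (0 : R).
      rewrite [X in _ --> X](_ : (0:R) = 0 * cA); last by rewrite mul0r.
      apply: cvgMr_tmp; apply: cvg_at_right_filter; exact: cvg_id.
    have FR : Filter ((0:R)^'+) by exact: _.
    have h := (cvgrPdist_lt (FF:=FR) _ _).1 hc _ e0.
    by apply: (@near_mono _ _ FR _ _ h) => s'; rewrite sub0r normrN => /(le_lt_trans (ler_norm _)).
  have Hs : \forall s \near 0^'+, [/\ 0 < s, s < 1, s * cA < `|Psi| / 2 &
      `|0 - inf [set `|P s t - Pbar| | t in [set t : R | 0 <= t]]| < del].
    near=> s; split.
    - by near: s; exact: nbhs_right_gt.
    - by near: s; exact: nbhs_right_lt.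
    - by near: s; exact: Hc.
    - by near: s; exact: ((cvgrPdist_lt _ _).1 hlim _ del0).
  have [s [s0 s1 scA hinf]] := filter_ex Hs.
  have [Hg HP0] := Hflow s s0.
  have ne : [set `|P s t - Pbar| | t in [set t : R | 0 <= t]] !=set0.
    by exists `|P s 0 - Pbar|; exists 0 => //=; rewrite lexx.
  have hinf' : inf [set `|P s t - Pbar| | t in [set t : R | 0 <= t]] < del.
    by move: hinf; rewrite sub0r normrN => /(le_lt_trans (ler_norm _)).
  have [_ [t t0 <-] ht] := inf_lt ne hinf'.
  have hb : ball Pbar del (P s t) by rewrite -ball_normE /ball_ /= distrC.
  have := Hdel _ hb; rewrite /= (balance i Hg t0) HP0 psi_scale => hlt.
  have h2 : `|s ^+ 2 * psi i A| < `|Psi| / 2.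
    rewrite normrM normrX (ger0_norm (ltW s0)).
    have cA0 : 0 <= cA by exact: normr_ge0.
    rewrite -/cA; nra.
  have := ler_normD (Psi - s ^+ 2 * psi i A) (s ^+ 2 * psi i A).
  rewrite subrK; lra.
have hw : forall j, Pbar.1 i j = 0.
  move: hpsi; rewrite /psi hi expr0n /= subr0 => h0 j.
  apply/eqP; rewrite -sqrf_eq0; apply/eqP.
  by apply: (psumr_eq0P _ h0) => // k _; rewrite sqr_ge0.
exists i; split => //; apply/rowP => j; rewrite !mxE; exact: hw.
Unshelve. all: by end_near.
Qed.
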